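(* Let $\mathcal{H}$ be a real Hilbert space, $A_1,A_2:\mathcal{H}\rightrightarrows\mathcal{H}$ maximally monotone, $\Gamma\subseteq\mathbb{R}_{++}$ a nonempty closed interval, $T_\gamma:=\mathrm{Id}-J_{\gamma A_1}+J_{\gamma A_2}(2J_{\gamma A_1}-\mathrm{Id})$ for $\gamma\in\Gamma$, and $\mathcal{Q}_{\delta\leftarrow\gamma}x:=\frac{\delta}{\gamma}x+\big(1-\frac{\delta}{\gamma}\big)J_{\gamma A_1}x$ for $\delta,\gamma\in\mathbb{R}_{++}$, $x\in\mathcal{H}$. Then for any nonempty bounded set $S\subseteq\bigcup_{\gamma\in\Gamma}(\operatorname{Fix}T_\gamma\times\{\gamma\})$ there exists $L\ge0$ such that $\|\mathcal{Q}_{\delta\leftarrow\gamma}x-\mathcal{Q}_{\gamma\leftarrow\gamma}x\|\le L|\delta-\gamma|$ for all $\delta\in\Gamma$ and all $(x,\gamma)\in S$.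
   Context: $J_A=(\mathrm{Id}+A)^{-1}$ is the resolvent of $A$; $\operatorname{Fix}T=\{x:Tx=x\}$. *)

(* Defs.v *)
From HB Require Import structures.
From mathcomp Require Import all_boot all_order all_algebra.
From mathcomp Require Import boolp classical_sets reals.
Set Implicit Arguments. Unset Strict Implicit. Unset Printing Implicit Defensive.
Import Order.TTheory GRing.Theory Num.Theory.
Local Open Scope ring_scope.
Local Open Scope classical_set_scope.

Section Hilbert.
Variables (R : realType) (V : lmodType R) (ip : V -> V -> R).

Definition is_inner_product : Prop :=
  [/\ forall x y, ip x y = ip y x,
      forall a x y z, ip (a *: x + y) z = a * ip x z + ip y z
    & forall x, x != 0 -> 0 < ip x x].

Definition hnorm (x : V) : R := Num.sqrt (ip x x).

Definition hcomplete : Prop :=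
  forall u : nat -> V,
    (forall e : R, 0 < e -> exists N, forall m n, (N <= m)%N -> (N <= n)%N ->
        hnorm (u m - u n) < e) ->
    exists l : V, forall e : R, 0 < e -> exists N, forall n, (N <= n)%N ->
        hnorm (u n - l) < e.

Definition is_hilbert : Prop := is_inner_product /\ hcomplete.

(* set-valued operators V ⇉ V, given by their graphs: A x u <-> u ∈ A x *)
Definition monotone (A : V -> set V) : Prop :=
  forall x y u v, A x u -> A y v -> 0 <= ip (x - y) (u - v).

Definition maximally_monotone (A : V -> set V) : Prop :=
  monotone A /\
  forall B : V -> set V, monotone B -> (forall x u, A x u -> B x u) ->
    forall x u, B x u -> A x u.

End Hilbert.

Section Resolvent.
Variables (R : realType) (V : lmodType R).

Definition scale_op (g : R) (A : V -> set V) : V -> set V :=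
  fun x => [set g *: u | u in A x].

(* resolvent J_B = (Id + B)^{-1}: J_B x is some p with x ∈ p + B p
   (unique when B is monotone; default value x if no such p exists) *)
Definition resolvent (B : V -> set V) (x : V) : V :=
  xget x [set p | exists2 u, B p u & x = p + u].

Definition DR_op (A1 A2 : V -> set V) (g : R) (x : V) : V :=
  x - resolvent (scale_op g A1) x
    + resolvent (scale_op g A2) (2%:R *: resolvent (scale_op g A1) x - x).

Definition Qop (A1 : V -> set V) (d g : R) (x : V) : V :=
  (d / g) *: x + (1 - d / g) *: resolvent (scale_op g A1) x.

End Resolvent.

(* Main.v *)
Require Import Defs.
From HB Require Import structures.
From mathcomp Require Import all_boot all_order all_algebra.
From mathcomp Require Import boolp classical_sets reals.
From mathcomp Require Import lra.
Import Order.TTheory GRing.Theory Num.Theory.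
Local Open Scope ring_scope.
Local Open Scope classical_set_scope.

Section Aux.
Context {R : realType} {V : lmodType R} {ip : V -> V -> R}.
Hypothesis hip : is_inner_product ip.

Lemma ipC x y : ip x y = ip y x.
Proof. by case: hip. Qed.
Lemma ipL a x y z : ip (a *: x + y) z = a * ip x z + ip y z.
Proof. by case: hip. Qed.
Lemma ip0l z : ip 0 z = 0.
Proof.
have := ipL 1 0 0 z; rewrite scaler0 addr0 mul1r => h.
by rewrite -[X in X = _]addr0 in h; move/addrI: h.
Qed.
Lemma ipDl x y z : ip (x + y) z = ip x z + ip y z.
Proof. by rewrite -(scale1r x) ipL mul1r scale1r. Qed.
Lemma ipZl a x z : ip (a *: x) z = a * ip x z.
Proof. by rewrite -(addr0 (a *: x)) ipL ip0l addr0. Qed.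
Lemma ipNl x z : ip (- x) z = - ip x z.
Proof. by rewrite -scaleN1r ipZl mulN1r. Qed.
Lemma ipDr x y z : ip z (x + y) = ip z x + ip z y.
Proof. by rewrite ipC ipDl ipC (ipC y). Qed.
Lemma ipZr a x z : ip z (a *: x) = a * ip z x.
Proof. by rewrite ipC ipZl ipC. Qed.
Lemma ipNr x z : ip z (- x) = - ip z x.
Proof. by rewrite ipC ipNl ipC. Qed.
Lemma ip_ge0 x : 0 <= ip x x.
Proof.
have [->|nz] := eqVneq x 0; first by rewrite ip0l.
by case: hip => _ _ /(_ x nz) /ltW.
Qed.
Lemma hnormZ a x : hnorm ip (a *: x) = `|a| * hnorm ip x.
Proof.
rewrite /hnorm ipZl ipZr mulrA -expr2 (sqrtrM _ (sqr_ge0 a)).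
by rewrite sqrtr_sqr.
Qed.
End Aux.

Theorem lemma4p1 (R : realType) (V : lmodType R) (ip : V -> V -> R)
  (A1 A2 : V -> set V) (Gam : set R) (S : set (V * R)) :
  is_hilbert ip ->
  maximally_monotone ip A1 -> maximally_monotone ip A2 ->
  (* Γ ⊆ R_{++} is a nonempty closed interval: [a,b] or [a,+∞) with 0 < a <= b *)
  (exists a : R, 0 < a /\
     ((exists2 b : R, a <= b & Gam = [set g | a <= g <= b]) \/
      Gam = [set g | a <= g])) ->
  (* S is nonempty, bounded, and S ⊆ ⋃_{γ∈Γ} Fix T_γ × {γ} *)
  S !=set0 ->
  (exists M : R, forall x g, S (x, g) -> hnorm ip x <= M /\ `|g| <= M) ->
  (forall x g, S (x, g) -> Gam g /\ DR_op A1 A2 g x = x) ->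
  exists L : R, 0 <= L /\
    forall d, Gam d -> forall x g, S (x, g) ->
      hnorm ip (Qop A1 d g x - Qop A1 g g x) <= L * `|d - g|.
Proof.
move=> [hip _] [mon1 max1] _ [a [a0 hG]] _ [M hM] hS.
have Gpos : forall g, Gam g -> a <= g.
  by move=> g; case: hG => [[b _ ->]|->] //= /andP[].
have [p0 [u0 h0]] : exists p u, A1 p u.
  case: (pselect (exists p u, A1 p u)) => [//|nex]; exfalso.
  have := max1 (fun x u => x = 0 /\ u = 0).
  have mB : monotone ip (fun x u => x = 0 /\ u = 0).
    by move=> x y u v [-> ->] [-> ->]; rewrite subrr (ip0l hip).
  move=> /(_ mB) H.
  have : A1 0 0.
    apply: H => // x u hxu; exfalso; by apply: nex; exists x, u.
  by move=> h; apply: nex; exists 0, 0.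
set B := 2 * M ^+ 2 + 2 * ip p0 p0 + M ^+ 2 * ip u0 u0.
have B0 : 0 <= B.
  have := ip_ge0 hip p0; have := ip_ge0 hip u0; rewrite /B.
  have := sqr_ge0 M; move=> *; nra.
exists (Num.sqrt B / a); split; first by rewrite divr_ge0 ?sqrtr_ge0 ?ltW.
move=> d Gd x g Sxg.
have [Gg _] := hS _ _ Sxg.
have ag := Gpos _ Gg.
have g0 : 0 < g by apply: lt_le_trans ag.
have [hx hg] := hM _ _ Sxg.
set J := resolvent (scale_op g A1) x.
have -> : Qop A1 d g x - Qop A1 g g x = (d / g - 1) *: (x - J).
  rewrite /Qop divff ?gt_eqF // subrr scale0r addr0 scale1r -/J.
  rewrite scalerBl scale1r scalerBr scalerBl scale1r scalerBl scale1r.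
  by rewrite opprB addrAC.
have Lge0 : 0 <= Num.sqrt B / a * `|d - g|.
  by rewrite mulr_ge0 // divr_ge0 ?sqrtr_ge0 // ltW.
case: (pselect (exists p, exists2 w, scale_op g A1 p w & x = p + w)) => [ex|nex]; last first.
  have -> : J = x by apply: xgetPN => p hp; apply: nex; exists p.
  by rewrite subrr scaler0 /hnorm (ip0l hip) sqrtr0.
have : (exists2 w, scale_op g A1 J w & x = J + w) := xgetPex x ex.
case=> w [u Au <-] hxw.
have -> : x - J = g *: u by rewrite hxw [J + _]addrC addrK.
have E1 := mon1 _ _ _ _ Au h0.
have eJ : J = x - g *: u by rewrite hxw addrK.
rewrite eJ in E1.
have E2 := ip_ge0 hip (x - p0 + g *: u0 - g *: u).
have E3 := ip_ge0 hip (x + p0).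
have Exx := ip_ge0 hip x.
have Euu := ip_ge0 hip u.
have Eu0 := ip_ge0 hip u0.
have Ep0 := ip_ge0 hip p0.
move: E1 E2 E3.
rewrite !(ipDl hip, ipDr hip, ipNl hip, ipNr hip, ipZl hip, ipZr hip).
rewrite ?(ipC hip u x) ?(ipC hip u0 x) ?(ipC hip p0 x) ?(ipC hip u0 u) ?(ipC hip p0 u) ?(ipC hip p0 u0) ?(ipC hip u p0) ?(ipC hip u0 p0).
move=> E1 E2 E3.
have gE1 := mulr_ge0 (ltW g0) E1.
have xxM : ip x x <= M ^+ 2.
  have s0 := sqrtr_ge0 (ip x x).
  have ss := sqr_sqrtr Exx.
  move: hx; rewrite /hnorm => hx.
  rewrite -ss; nra.
have gM : g ^+ 2 <= M ^+ 2.
  rewrite ger0_norm in hg; last exact: ltW g0.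
  nra.
have gu0 : g ^+ 2 * ip u0 u0 <= M ^+ 2 * ip u0 u0 by rewrite ler_wpM2r.
have K : g ^+ 2 * ip u u <= B.
  have H : 0 <= 2 * ip x x + 2 * ip p0 p0 + g ^+ 2 * ip u0 u0 - g ^+ 2 * ip u u.
    clear -gE1 E2 E3. lra.
  rewrite /B; lra.
have s0 : 0 <= hnorm ip u by apply: sqrtr_ge0.
have gs : g * hnorm ip u <= Num.sqrt B.
  have -> : g * hnorm ip u = Num.sqrt (g ^+ 2 * ip u u).
    by rewrite (sqrtrM _ (sqr_ge0 g)) sqrtr_sqr ger0_norm // ltW.
  exact: ler_wsqrtr.
have sa : hnorm ip u <= Num.sqrt B / a.
  rewrite ler_pdivlMr //; nra.
rewrite !(hnormZ hip) mulrA.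
have -> : `|d / g - 1| * `|g| = `|d - g|.
  by rewrite -normrM mulrBl mulrAC -mulrA divff ?gt_eqF // mulr1 mul1r.
by rewrite mulrC ler_wpM2r.
Qed.
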